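(* Let $\triangle PQR$ be a (closed, filled) triangle in $D$ with $\delta(P,Q,R)=\frac{1}{2}\Delta_1'(P,Q)$. Then $\rho(\psi_{\triangle PQR})=\frac{2}{5}$.
   Context: $D$ is the open unit disk in $\mathbb R^2$, $S^1$ its boundary circle identified with $\mathbb R/\mathbb Z$ via the counterclockwise normalized angle. For a closed convex $U\subset D$ and $v\in S^1$, $\psi_U(v)$ is the point $w\in S^1\setminus\{v\}$ such that the line $vw$ meets $U$ and $U$ lies in the closed half-plane to the left of the directed line from $v$ to $w$; it is an orientation-preserving homeomorphism of $S^1$. For such $f$, $\rho(f)=\lim_{n\to\infty}(\overline f^n(x)-x)/n$ with $\overline f$ the lift to $\mathbb R$ satisfying $\overline f(0)\in[0,1)$. Regard $D$ as the Beltrami–Klein model (hyperbolic lines are chords). For distinct $P,Q\in D$ with chord endpoints $v_1,v_2\in S^1$, $d'(P,Q)=\tfrac12\left|\log\frac{|v_1Q||v_2P|}{|v_1P||v_2Q|}\right|$; $\Delta_n'(P,Q)=\log\frac{e^{n d'(P,Q)}+1}{e^{n d'(P,Q)}-1}$ for $n\in\mathbb Z_{>0}$; $\delta(P,Q,R)=\min\{d'(R,S): S \text{ on the chord through } P,Q\}$. *)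

(* Defs.v *)
From Stdlib Require Import Reals Lra.
Open Scope R_scope.

Definition pt := (R * R)%type.

Definition sq_norm (p : pt) : R := fst p * fst p + snd p * snd p.
Definition in_D (p : pt) : Prop := sq_norm p < 1.
Definition on_S1 (p : pt) : Prop := sq_norm p = 1.

Definition psub (p q : pt) : pt := (fst p - fst q, snd p - snd q).
Definition padd (p q : pt) : pt := (fst p + fst q, snd p + snd q).
Definition pscale (t : R) (p : pt) : pt := (t * fst p, t * snd p).
Definition dot (p q : pt) : R := fst p * fst q + snd p * snd q.

Definition edist (p q : pt) : R := sqrt (sq_norm (psub p q)).

(* S^1 = R/Z via the counterclockwise normalized angle *)
Definition circ (t : R) : pt := (cos (2 * PI * t), sin (2 * PI * t)).

(* cross o a b > 0 iff b is strictly to the left of the directed line o -> a *)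
Definition cross (o a b : pt) : R :=
  (fst a - fst o) * (snd b - snd o) - (snd a - snd o) * (fst b - fst o).

Definition filled_triangle (A B C : pt) (u : pt) : Prop :=
  exists a b c : R, 0 <= a /\ 0 <= b /\ 0 <= c /\ a + b + c = 1 /\
    u = padd (pscale a A) (padd (pscale b B) (pscale c C)).

(* w = psi_U(v): w on S^1, w <> v, the line vw meets U, and U lies in the
   closed half-plane to the left of the directed line from v to w *)
Definition psi_rel (U : pt -> Prop) (v w : pt) : Prop :=
  on_S1 v /\ on_S1 w /\ w <> v /\
  (exists u, U u /\ cross v w u = 0) /\
  (forall u, U u -> 0 <= cross v w u).

Definition is_lift_psi (U : pt -> Prop) (F : R -> R) : Prop :=
  continuity F /\ 0 <= F 0 < 1 /\
  forall x, psi_rel U (circ x) (circ (F x)).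

(* endpoints v1, v2 on S^1 of the chord through distinct P, Q:
   P + t (Q - P) with |P + t (Q - P)|^2 = 1 *)
Definition chord_t (P Q : pt) (sgn : R) : R :=
  let a := sq_norm (psub Q P) in
  let b := 2 * dot P (psub Q P) in
  let c := sq_norm P - 1 in
  (- b + sgn * sqrt (b * b - 4 * a * c)) / (2 * a).
Definition chord_end1 (P Q : pt) : pt := padd P (pscale (chord_t P Q (-1)) (psub Q P)).
Definition chord_end2 (P Q : pt) : pt := padd P (pscale (chord_t P Q 1) (psub Q P)).

(* hyperbolic (Klein model) distance d'; d'(P,P) := 0 *)
Definition dprime (P Q : pt) : R :=
  if Rle_dec (sq_norm (psub Q P)) 0 then 0 else
  let v1 := chord_end1 P Q in
  let v2 := chord_end2 P Q in
  / 2 * Rabs (ln ((edist v1 Q * edist v2 P) / (edist v1 P * edist v2 Q))).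

Definition Deltaprime (n : nat) (P Q : pt) : R :=
  ln ((exp (INR n * dprime P Q) + 1) / (exp (INR n * dprime P Q) - 1)).

Definition on_chord (P Q S : pt) : Prop := in_D S /\ cross P Q S = 0.

Definition delta_is (P Q C : pt) (m : R) : Prop :=
  (exists S, on_chord P Q S /\ dprime C S = m) /\
  (forall S, on_chord P Q S -> m <= dprime C S).

(* Main.v *)
Require Import Defs.
From Stdlib Require Import Reals Lra Lia Psatz Field ZArith.
Open Scope R_scope.

Lemma circ_S1 t : on_S1 (circ t).
Proof. unfold on_S1, sq_norm, circ; simpl. pose proof (sin2_cos2 (2*PI*t)). unfold Rsqr in H. lra. Qed.

Lemma circ_shift_nat t (k : nat) : circ (t + INR k) = circ t.
Proof.
  unfold circ. replace (2 * PI * (t + INR k)) with (2*PI*t + 2 * INR k * PI) by ring.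
  now rewrite cos_period, sin_period.
Qed.

Lemma circ_shift1 t : circ (t + 1) = circ t.
Proof. replace 1 with (INR 1) by (simpl; lra). apply circ_shift_nat. Qed.

Lemma circ_dist t s : sq_norm (psub (circ t) (circ s)) = 4 * (sin (PI * (t - s)))^2.
Proof.
  unfold sq_norm, psub, circ; simpl.
  assert (H1: cos (2*PI*t - 2*PI*s) = 1 - 2 * sin (PI*(t-s)) * sin (PI*(t-s))).
  { rewrite <- cos_2a_sin. f_equal. ring. }
  rewrite cos_minus in H1.
  pose proof (sin2_cos2 (2*PI*t)). pose proof (sin2_cos2 (2*PI*s)). unfold Rsqr in *. nra.
Qed.

Lemma circ_eq t s : circ t = circ s -> exists k : Z, t - s = IZR k.
Proof.
  intro H. assert (H0 : sq_norm (psub (circ t) (circ s)) = 0).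
  { rewrite H. unfold sq_norm, psub; simpl. ring. }
  rewrite circ_dist in H0. assert (Hs: sin (PI * (t - s)) = 0) by nra.
  destruct (sin_eq_0_0 _ Hs) as [k Hk]. exists k.
  pose proof PI_RGT_0. apply Rmult_eq_reg_l with PI; [|lra]. rewrite Hk; ring.
Qed.

Lemma IZR_strip (k : Z) : -1 < IZR k < 1 -> IZR k = 0.
Proof. intros [H1 H2]. apply lt_IZR in H1. apply lt_IZR in H2. assert (k = 0%Z) by lia. subst; reflexivity. Qed.

Lemma circ_eq_close t s : circ t = circ s -> -1 < t - s < 1 -> t = s.
Proof. intros H Hb. destruct (circ_eq _ _ H) as [k Hk]. rewrite Hk in Hb. apply IZR_strip in Hb. lra. Qed.

Lemma circ_neq t s : 0 < t - s < 1 -> circ t <> circ s.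
Proof. intros Hb H. apply circ_eq_close in H; lra. Qed.

Lemma sin3_identity x y :
  sin (2*x) + sin (2*y) - sin (2*x + 2*y) = 4 * sin x * sin y * sin (x + y).
Proof.
  replace (2*x+2*y) with (2*(x+y)) by ring.
  rewrite !sin_2a, sin_plus, cos_plus.
  pose proof (sin2_cos2 x). pose proof (sin2_cos2 y). unfold Rsqr in *.
  set (cx := cos x) in *. set (sx := sin x) in *. set (cy := cos y) in *. set (sy := sin y) in *.
  assert (E : forall u v : R, u - v = 0 -> u = v) by (intros; lra). apply E.
  transitivity (2*sx*cx*(1 - cy*cy - sy*sy) + 2*sy*cy*(1 - cx*cx - sx*sx)).
  - ring.
  - replace (1 - cy*cy - sy*sy) with 0 by lra. replace (1 - cx*cx - sx*sx) with 0 by lra. ring.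
Qed.

Lemma cross_circ a b c :
  cross (circ a) (circ b) (circ c) = 4 * sin (PI*(b-a)) * sin (PI*(c-b)) * sin (PI*(c-a)).
Proof.
  set (al := 2*PI*a). set (x := PI*(b-a)). set (y := PI*(c-b)).
  assert (Hb : 2*PI*b = al + 2*x) by (unfold al, x; ring).
  assert (Hc : 2*PI*c = al + (2*x + 2*y)) by (unfold al, x, y; ring).
  assert (Hca : PI*(c-a) = x + y) by (unfold x, y; ring).
  unfold cross, circ; simpl. rewrite Hb, Hc, Hca. fold al.
  rewrite <- sin3_identity.
  rewrite (cos_plus al), (sin_plus al), (cos_plus al), (sin_plus al).
  pose proof (sin2_cos2 al). unfold Rsqr in *.
  assert (Hm : sin (2*y) = sin (2*x+2*y) * cos (2*x) - cos (2*x+2*y) * sin (2*x)).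
  { rewrite <- sin_minus. f_equal. ring. }
  rewrite Hm.
  set (ca := cos al) in *. set (sa := sin al) in *.
  set (C1 := cos (2*x)). set (S1 := sin (2*x)). set (C2 := cos (2*x+2*y)). set (S2 := sin (2*x+2*y)).
  transitivity ((sa*sa+ca*ca) * ((C1-1)*S2 - S1*(C2-1))).
  - ring.
  - rewrite H. ring.
Qed.

Lemma cross_circ_pos a b c : a < b -> b < c -> c < a + 1 ->
  0 < cross (circ a) (circ b) (circ c).
Proof.
  intros H1 H2 H3. rewrite cross_circ. pose proof PI_RGT_0.
  assert (0 < sin (PI*(b-a))) by (apply sin_gt_0; nra).
  assert (0 < sin (PI*(c-b))) by (apply sin_gt_0; nra).
  assert (0 < sin (PI*(c-a))) by (apply sin_gt_0; nra).
  assert (0 < sin (PI * (b - a)) * sin (PI * (c - b))) by (apply Rmult_lt_0_compat; auto).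
  nra.
Qed.

Lemma cross_cyc o a b : cross o a b = cross a b o.
Proof. unfold cross; ring. Qed.
Lemma cross_swap o a b : cross o a b = - cross o b a.
Proof. unfold cross; ring. Qed.
Lemma cross_comb o a v w l :
  cross o a (padd v (pscale l (psub w v))) = (1 - l) * cross o a v + l * cross o a w.
Proof. unfold cross, padd, pscale, psub; simpl; ring. Qed.

Lemma circ_shift_Z t (k : Z) : circ (t + IZR k) = circ t.
Proof.
  destruct (ZArith_dec.Z_le_gt_dec 0 k) as [Hk|Hk].
  - rewrite <- (Z2Nat.id k Hk), <- INR_IZR_INZ. apply circ_shift_nat.
  - assert (Hk' : (0 <= - k)%Z) by lia.
    rewrite <- (circ_shift_nat (t + IZR k) (Z.to_nat (-k))).
    rewrite INR_IZR_INZ, Z2Nat.id by exact Hk'. rewrite opp_IZR. f_equal; ring.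
Qed.

Lemma S1_angle w : on_S1 w -> exists t, w = circ t.
Proof.
  destruct w as [x y]. unfold on_S1, sq_norm; simpl. intro H.
  destruct (Req_dec x (-1)) as [Hx|Hx].
  - exists (/2). subst x. assert (y = 0) by nra. subst y.
    unfold circ. replace (2*PI*/2) with PI by field. rewrite cos_PI, sin_PI. reflexivity.
  - assert (Hx1 : 0 < 1 + x) by nra.
    set (r := y / (1 + x)). exists (atan r / PI).
    pose proof PI_RGT_0.
    unfold circ. replace (2 * PI * (atan r / PI)) with (2 * atan r) by (field; lra).
    rewrite cos_2a, sin_2a, cos_atan, sin_atan.
    assert (Hs : 0 < sqrt (1 + r²)) by (apply sqrt_lt_R0; unfold Rsqr; nra).
    assert (Hss : sqrt (1 + r²) * sqrt (1 + r²) = 1 + r²) by (apply sqrt_sqrt; unfold Rsqr; nra).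
    assert (Hr : y = r * (1 + x)) by (unfold r; field; lra).
    assert (Hr2 : r*r*(1+x) = 1 - x).
    { rewrite Hr in H. assert (E: (1+x)*((1-x) - r*r*(1+x)) = 0) by (ring_simplify; ring_simplify in H; lra).
      apply Rmult_integral in E. destruct E; lra. }
    assert (Hr3 : 1 + r*r = 2 / (1+x)) by (apply Rmult_eq_reg_r with (1+x); [field_simplify; lra | lra]).
    unfold Rsqr in *.
    f_equal; symmetry.
    + transitivity ((1 - r*r) / (sqrt (1 + r*r) * sqrt (1 + r*r))).
      * field. lra.
      * rewrite Hss, Hr3.
        assert (Hr4 : r*r = (1-x)/(1+x)) by (apply Rmult_eq_reg_r with (1+x); [field_simplify; lra | lra]).
        rewrite Hr4. field. lra.
    + transitivity (2 * r / (sqrt (1 + r*r) * sqrt (1 + r*r))).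
      * field. lra.
      * rewrite Hss, Hr3, Hr. field. lra.
Qed.

Lemma S1_angle_in w a : on_S1 w -> exists t, w = circ t /\ a < t <= a + 1.
Proof.
  intro H. destruct (S1_angle w H) as [t Ht].
  destruct (archimed (a - t)) as [H1 H2].
  exists (t + IZR (up (a - t))). split.
  - rewrite circ_shift_Z. exact Ht.
  - lra.
Qed.

Definition sig (M v : pt) : pt :=
  padd v (pscale (2 * (1 - dot v M) / sq_norm (psub M v)) (psub M v)).

Lemma dot_lt1 v M : on_S1 v -> in_D M -> dot v M < 1.
Proof.
  destruct v as [c s], M as [m1 m2]. unfold on_S1, in_D, sq_norm, dot; simpl. intros H1 H2.
  assert ((c*m1+s*m2)^2 <= (c*c+s*s)*(m1*m1+m2*m2)) by (pose proof (pow2_ge_0 (c*m2 - s*m1)); nra).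
  rewrite H1 in H. nra.
Qed.

Lemma sqn_pos_neq v M : on_S1 v -> in_D M -> 0 < sq_norm (psub M v).
Proof.
  intros H1 H2. pose proof (dot_lt1 v M H1 H2). destruct v as [c s], M as [m1 m2].
  unfold on_S1, in_D, sq_norm, dot, psub in *; simpl in *.
  assert (Hcs : (c*(c-m1)+s*(s-m2))^2 <= (c*c+s*s)*((m1-c)*(m1-c)+(m2-s)*(m2-s))) by (pose proof (pow2_ge_0 (c*(m2-s) - s*(m1-c))); nra).
  rewrite H1 in Hcs. assert (Hw : c*(c-m1)+s*(s-m2) = 1 - (c*m1+s*m2)) by nra. rewrite Hw in Hcs.
  assert (0 < (1 - (c*m1+s*m2))^2) by (apply pow_lt; lra). lra.
Qed.

Lemma sig_chord v w M l : on_S1 v -> on_S1 w -> v <> w -> l <> 0 ->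
  M = padd v (pscale l (psub w v)) -> sig M v = w.
Proof.
  intros Hv Hw Hvw Hl HM. subst M.
  destruct v as [c s], w as [a b]. unfold on_S1, sq_norm in *; simpl in *.
  assert (Hd : 0 < (a-c)^2 + (b-s)^2).
  { destruct (Req_dec a c); destruct (Req_dec b s); subst; try nra. exfalso; auto. }
  unfold sig, padd, pscale, psub, dot, sq_norm; simpl.
  assert (E1 : 1 - (c * (c + l * (a - c)) + s * (s + l * (b - s))) = l * ((a-c)^2 + (b-s)^2) / 2) by nra.
  assert (E2 : (c + l * (a - c) - c) * (c + l * (a - c) - c) + (s + l * (b - s) - s) * (s + l * (b - s) - s)
              = l * l * ((a-c)^2 + (b-s)^2)) by ring.
  rewrite E1, E2. f_equal; field; split; try lra; auto.
Qed.

Definition lam (M v : pt) : R := sq_norm (psub M v) / (2 * (1 - dot v M)).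

Lemma sig_props v M : on_S1 v -> in_D M ->
  on_S1 (sig M v) /\ sig M v <> v /\ 0 < lam M v < 1 /\
  M = padd v (pscale (lam M v) (psub (sig M v) v)).
Proof.
  intros Hv HM. pose proof (dot_lt1 v M Hv HM) as Hu. pose proof (sqn_pos_neq v M Hv HM) as HN.
  destruct v as [c s], M as [m1 m2]. unfold sig, lam in *; unfold on_S1, in_D, sq_norm, dot, psub, padd, pscale in *; simpl in *.
  set (u := c*m1+s*m2) in *. set (N := (m1 - c) * (m1 - c) + (m2 - s) * (m2 - s)) in *.
  set (k := 2 * (1 - u) / N).
  assert (Hk : k * N = 2 * (1 - u)) by (unfold k; field; lra).
  assert (Hk0 : 0 < k) by (unfold k; apply Rdiv_lt_0_compat; lra).
  assert (HN2 : N = m1*m1+m2*m2 - 2*u + 1) by (unfold N, u; nra).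
  split; [|split; [|split]].
  - transitivity ((c*c+s*s) + 2*k*(c*(m1-c)+s*(m2-s)) + k*(k*N)); [unfold N; ring|].
    rewrite Hk. replace (c*(m1-c)+s*(m2-s)) with (u - (c*c+s*s)) by (unfold u; ring). rewrite Hv. ring.
  - intro E. injection E. intros E2 E1.
    assert (k * (m1 - c) = 0) by lra. assert (k * (m2 - s) = 0) by lra.
    assert (m1 - c = 0) by (apply Rmult_integral in H; destruct H; lra).
    assert (m2 - s = 0) by (apply Rmult_integral in H0; destruct H0; lra).
    unfold N in HN. nra.
  - split; [apply Rdiv_lt_0_compat; lra|]. apply (Rmult_lt_reg_r (2*(1-u))); [lra|].
    unfold Rdiv. rewrite Rmult_assoc, Rinv_l by lra. lra.
  - f_equal; unfold k; field; split; lra.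
Qed.

Lemma sig_S1 v M : on_S1 v -> in_D M -> on_S1 (sig M v).
Proof. intros; apply sig_props; auto. Qed.

Lemma sig_invol v M : on_S1 v -> in_D M -> sig M (sig M v) = v.
Proof.
  intros Hv HM. destruct (sig_props v M Hv HM) as [Hw [Hne [Hl HMe]]].
  apply sig_chord with (l := 1 - lam M v); auto. lra.
  rewrite HMe at 1. destruct v as [v1 v2], (sig M (v1,v2)) as [w1 w2]. unfold padd, pscale, psub; simpl. f_equal; ring.
Qed.

Definition rr (M : pt) (x : R) : R :=
  (sin (2*PI*x) * fst M - cos (2*PI*x) * snd M) / (1 - (cos (2*PI*x) * fst M + sin (2*PI*x) * snd M)).
Definition theta (M : pt) (x : R) : R := / 2 + atan (rr M x) / PI.

Lemma theta_bounds M x : 0 < theta M x < 1.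
Proof.
  unfold theta. pose proof (atan_bound (rr M x)). pose proof PI_RGT_0.
  split.
  - assert (- / 2 < atan (rr M x) / PI). { apply (Rmult_lt_reg_r PI); [lra|]. field_simplify; lra. } lra.
  - assert (atan (rr M x) / PI < /2). { apply (Rmult_lt_reg_r PI); [lra|]. field_simplify; lra. } lra.
Qed.

Lemma theta_cont M : in_D M -> continuity (theta M).
Proof.
  intro HM. unfold theta.
  assert (Hr : continuity (rr M)).
  { unfold rr. assert (Hnz : forall x, 1 - (cos (2*PI*x) * fst M + sin (2*PI*x) * snd M) <> 0).
    { intro x. pose proof (dot_lt1 (circ x) M (circ_S1 x) HM). unfold dot, circ in H; simpl in H. lra. }
    reg. }
  assert (Ha : continuity atan) by (intro; apply derivable_continuous_pt, derivable_pt_atan).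
  assert (Hc : continuity (fun x => atan (rr M x))) by (apply (continuity_comp (rr M) atan); auto).
  reg. 
Qed.

Lemma circ_theta M x : in_D M -> circ (x + theta M x) = sig M (circ x).
Proof.
  intro HM. symmetry.
  pose proof (dot_lt1 (circ x) M (circ_S1 x) HM) as Hu.
  pose proof (circ_S1 x) as Hv.
  assert (Hw : on_S1 (circ (x + theta M x))) by apply circ_S1.
  assert (Hne : circ x <> circ (x + theta M x)).
  { intro E. symmetry in E. apply circ_neq in E; auto. pose proof (theta_bounds M x). lra. }
  destruct M as [m1 m2]. set (c := cos (2*PI*x)). set (s := sin (2*PI*x)).
  set (dd := 1 - (c*m1 + s*m2)). set (r := rr (m1,m2) x).
  assert (Hdd : 0 < dd) by (unfold dd, c, s; unfold dot, circ in Hu; simpl in Hu; lra).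
  assert (Hr : r = (s*m1 - c*m2)/dd) by reflexivity.
  assert (Hcs : c*c + s*s = 1) by (unfold on_S1, sq_norm, circ in Hv; simpl in Hv; unfold c, s; lra).
  pose proof PI_RGT_0.
  assert (Hang : 2*PI*(x + theta (m1,m2) x) = (2*PI*x + 2 * atan r) + PI).
  { unfold theta. fold r. field. lra. }
  assert (Hsq : sqrt (1 + r²) * sqrt (1 + r²) = 1 + r*r) by (rewrite sqrt_sqrt; unfold Rsqr; nra).
  assert (Hsp : 0 < sqrt (1 + r²)) by (apply sqrt_lt_R0; unfold Rsqr; nra).
  assert (HC2 : cos (2 * atan r) = (1 - r*r)/(1+r*r)).
  { rewrite cos_2a, cos_atan, sin_atan. rewrite <- Hsq. field. lra. }
  assert (HS2 : sin (2 * atan r) = 2*r/(1+r*r)).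
  { rewrite sin_2a, cos_atan, sin_atan. rewrite <- Hsq. field. lra. }
  assert (Ewx : circ (x + theta (m1,m2) x) = ((2*s*r - c*(1-r*r))/(1+r*r) - c + c, (-2*c*r - s*(1-r*r))/(1+r*r))).
  { unfold circ. rewrite Hang. rewrite (cos_plus _ PI), (sin_plus _ PI), cos_PI, sin_PI, (cos_plus (2*PI*x)), (sin_plus (2*PI*x)), HC2, HS2.
    fold c s. f_equal; field; nra. }
  apply sig_chord with (l := dd * (1 + r*r) / 2); auto.
  - assert (0 < 1 + r*r) by nra. apply Rgt_not_eq. apply Rlt_gt. apply Rdiv_lt_0_compat; [nra|lra].
  - rewrite Ewx. unfold padd, pscale, psub, circ; simpl. fold c s. f_equal.
    + transitivity ((c*c+s*s)*m1); [rewrite Hcs; ring|]. rewrite Hr. unfold dd. field. fold dd. split; [lra|].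
      assert (0 < dd*dd) by nra. pose proof (pow2_ge_0 (s * m1 - c * m2)). nra.
    + transitivity ((c*c+s*s)*m2); [rewrite Hcs; ring|]. rewrite Hr. unfold dd. field. fold dd. split; [lra|].
      assert (0 < dd*dd) by nra. pose proof (pow2_ge_0 (s * m1 - c * m2)). nra.
Qed.

Lemma Rmin_formula a b : Rmin a b = (a + b - Rabs (a - b)) / 2.
Proof. unfold Rmin. destruct (Rle_dec a b); [rewrite Rabs_left1|rewrite Rabs_right]; lra. Qed.

Lemma continuity_Rmin f g : continuity f -> continuity g -> continuity (fun x => Rmin (f x) (g x)).
Proof.
  intros Hf Hg.
  assert (Hd : continuity (fun x => f x - g x)) by reg.
  assert (Ha : continuity (fun x => Rabs (f x - g x))) by (apply (continuity_comp (fun x => f x - g x) Rabs); auto; apply Rcontinuity_abs).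
  assert (H : continuity (fun x => (f x + g x - Rabs (f x - g x)) / 2)) by reg.
  intro x. apply continuity_pt_locally_ext with (a := 1) (f := fun x => (f x + g x - Rabs (f x - g x)) / 2); [lra| |apply H].
  intros y _. symmetry. apply Rmin_formula.
Qed.

Definition tmin (P Q C : pt) (x : R) : R := Rmin (theta P x) (Rmin (theta Q x) (theta C x)).
Definition F0 (P Q C : pt) (x : R) : R := x + tmin P Q C x.

Lemma tmin_cases P Q C x :
  (tmin P Q C x = theta P x \/ tmin P Q C x = theta Q x \/ tmin P Q C x = theta C x) /\
  tmin P Q C x <= theta P x /\ tmin P Q C x <= theta Q x /\ tmin P Q C x <= theta C x.
Proof.
  unfold tmin, Rmin. destruct (Rle_dec (theta Q x) (theta C x)); repeat match goal with |- context[Rle_dec ?a ?b] => destruct (Rle_dec a b) end;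
  (split; [ first [left; reflexivity | right; left; reflexivity | right; right; reflexivity] | idtac]). all: lra.
Qed.

Lemma tmin_bounds P Q C x : 0 < tmin P Q C x < 1.
Proof.
  destruct (tmin_cases P Q C x) as [[H|[H|H]] _]; rewrite H; apply theta_bounds.
Qed.


Lemma tri_comb P Q C v w u : filled_triangle P Q C u ->
  exists a b c, 0 <= a /\ 0 <= b /\ 0 <= c /\ a + b + c = 1 /\
  cross v w u = a * cross v w P + b * cross v w Q + c * cross v w C.
Proof.
  intros [a [b [c [Ha [Hb [Hc [Hs Hu]]]]]]]. exists a, b, c. repeat split; auto.
  subst u. replace c with (1 - a - b) by lra.
  destruct P, Q, C, v, w. unfold cross, padd, pscale; simpl. ring.
Qed.

Lemma tri_nonneg P Q C v w u : filled_triangle P Q C u ->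
  0 <= cross v w P -> 0 <= cross v w Q -> 0 <= cross v w C -> 0 <= cross v w u.
Proof.
  intros Hu H1 H2 H3. destruct (tri_comb P Q C v w u Hu) as [a [b [c [Ha [Hb [Hc [Hs E]]]]]]].
  rewrite E. assert (0 <= a * cross v w P) by (apply Rmult_le_pos; auto).
  assert (0 <= b * cross v w Q) by (apply Rmult_le_pos; auto).
  assert (0 <= c * cross v w C) by (apply Rmult_le_pos; auto). lra.
Qed.

Lemma tri_pos P Q C v w u : filled_triangle P Q C u ->
  0 < cross v w P -> 0 < cross v w Q -> 0 < cross v w C -> 0 < cross v w u.
Proof.
  intros Hu H1 H2 H3. destruct (tri_comb P Q C v w u Hu) as [a [b [c [Ha [Hb [Hc [Hs E]]]]]]].
  rewrite E.
  destruct (Rle_lt_or_eq_dec 0 a Ha) as [Ha'|Ha'].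
  - assert (0 < a * cross v w P) by (apply Rmult_lt_0_compat; auto).
    assert (0 <= b * cross v w Q) by (apply Rmult_le_pos; lra).
    assert (0 <= c * cross v w C) by (apply Rmult_le_pos; lra). lra.
  - destruct (Rle_lt_or_eq_dec 0 b Hb) as [Hb'|Hb'].
    + assert (0 < b * cross v w Q) by (apply Rmult_lt_0_compat; auto).
      assert (0 <= c * cross v w C) by (apply Rmult_le_pos; lra). subst a. lra.
    + assert (c = 1) by lra. subst. lra.
Qed.

Lemma tri_P P Q C : filled_triangle P Q C P.
Proof. exists 1, 0, 0. repeat split; try lra. destruct P, Q, C; unfold padd, pscale; simpl; f_equal; ring. Qed.
Lemma tri_Q P Q C : filled_triangle P Q C Q.
Proof. exists 0, 1, 0. repeat split; try lra. destruct P, Q, C; unfold padd, pscale; simpl; f_equal; ring. Qed.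
Lemma tri_C P Q C : filled_triangle P Q C C.
Proof. exists 0, 0, 1. repeat split; try lra. destruct P, Q, C; unfold padd, pscale; simpl; f_equal; ring. Qed.

Lemma vert_cross M x t : in_D M ->
  cross (circ x) (circ (x + t)) M = lam M (circ x) * cross (circ x) (circ (x+t)) (circ (x + theta M x)).
Proof.
  intro HM. destruct (sig_props (circ x) M (circ_S1 x) HM) as [_ [_ [_ E]]].
  rewrite circ_theta by auto. rewrite E at 1. rewrite cross_comb.
  replace (cross (circ x) (circ (x + t)) (circ x)) with 0 by (unfold cross; ring). ring.
Qed.

Lemma vert_sign_lt M x t : in_D M -> 0 < t -> t < theta M x ->
  0 < cross (circ x) (circ (x + t)) M.
Proof.
  intros HM H1 H2. rewrite vert_cross by auto.
  destruct (sig_props (circ x) M (circ_S1 x) HM) as [_ [_ [Hl _]]].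
  apply Rmult_lt_0_compat; [lra|]. apply cross_circ_pos; pose proof (theta_bounds M x); lra.
Qed.

Lemma vert_sign_gt M x t : in_D M -> t < 1 -> theta M x < t ->
  cross (circ x) (circ (x + t)) M < 0.
Proof.
  intros HM H1 H2. rewrite vert_cross by auto.
  destruct (sig_props (circ x) M (circ_S1 x) HM) as [_ [_ [Hl _]]].
  rewrite cross_swap. assert (0 < cross (circ x) (circ (x + theta M x)) (circ (x + t))).
  { apply cross_circ_pos; pose proof (theta_bounds M x); lra. }
  nra.
Qed.

Lemma vert_sign_eq M x : in_D M -> cross (circ x) (circ (x + theta M x)) M = 0.
Proof. intros HM. rewrite vert_cross by auto. unfold cross; ring. Qed.

Lemma vert_sign_le M x t : in_D M -> 0 < t -> t <= theta M x ->
  0 <= cross (circ x) (circ (x + t)) M.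
Proof.
  intros HM H1 H2. destruct (Rle_lt_or_eq_dec _ _ H2).
  - left; apply vert_sign_lt; auto.
  - subst. right. symmetry. apply vert_sign_eq; auto.
Qed.

Lemma psi_F0 P Q C x : in_D P -> in_D Q -> in_D C ->
  psi_rel (filled_triangle P Q C) (circ x) (circ (F0 P Q C x)).
Proof.
  intros HP HQ HC. unfold F0. pose proof (tmin_bounds P Q C x) as Hb.
  destruct (tmin_cases P Q C x) as [Hc [H1 [H2 H3]]].
  set (m := tmin P Q C x) in *.
  split; [apply circ_S1|]. split; [apply circ_S1|]. split.
  - apply circ_neq. lra.
  - split.
    + destruct Hc as [E|[E|E]]; [exists P|exists Q|exists C]; (split; [apply tri_P || apply tri_Q || apply tri_C|]);
      rewrite E; apply vert_sign_eq; auto.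
    + intros u Hu. apply (tri_nonneg P Q C); auto; apply vert_sign_le; auto; lra.
Qed.

Lemma psi_unique P Q C x w : in_D P -> in_D Q -> in_D C ->
  psi_rel (filled_triangle P Q C) (circ x) w -> w = circ (F0 P Q C x).
Proof.
  intros HP HQ HC [_ [Hw [Hne [[u [Hu Hu0]] Hall]]]].
  destruct (S1_angle_in w x Hw) as [t [Ht Htb]]. subst w.
  assert (Ht1 : t < x + 1).
  { destruct (Rle_lt_or_eq_dec _ _ (proj2 Htb)); auto. subst t. exfalso. apply Hne. apply circ_shift1. }
  pose proof (tmin_bounds P Q C x) as Hb.
  destruct (tmin_cases P Q C x) as [Hc [H1 [H2 H3]]].
  set (m := tmin P Q C x) in *.
  replace t with (x + (t - x)) in * by ring. set (s := t - x) in *.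
  unfold F0. fold m.
  destruct (Rtotal_order s m) as [Hlt|[Heq|Hgt]].
  - exfalso. assert (0 < cross (circ x) (circ (x + s)) u).
    { apply (tri_pos P Q C); auto; apply vert_sign_lt; auto; lra. }
    lra.
  - rewrite Heq. reflexivity.
  - exfalso. destruct Hc as [E|[E|E]].
    + pose proof (Hall P (tri_P P Q C)). assert (cross (circ x) (circ (x + s)) P < 0) by (apply vert_sign_gt; auto; lra). lra.
    + pose proof (Hall Q (tri_Q P Q C)). assert (cross (circ x) (circ (x + s)) Q < 0) by (apply vert_sign_gt; auto; lra). lra.
    + pose proof (Hall C (tri_C P Q C)). assert (cross (circ x) (circ (x + s)) C < 0) by (apply vert_sign_gt; auto; lra). lra.
Qed.

Lemma F0_cont P Q C : in_D P -> in_D Q -> in_D C -> continuity (F0 P Q C).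
Proof.
  intros HP HQ HC. unfold F0, tmin.
  assert (continuity (fun x => Rmin (theta P x) (Rmin (theta Q x) (theta C x)))).
  { apply continuity_Rmin; [apply theta_cont; auto|]. apply continuity_Rmin; apply theta_cont; auto. }
  intro x0. apply (continuity_pt_plus (fun x => x) (fun x => Rmin (theta P x) (Rmin (theta Q x) (theta C x)))).
  apply derivable_continuous_pt, derivable_pt_id. apply H.
Qed.

Lemma F0_lift P Q C : in_D P -> in_D Q -> in_D C -> is_lift_psi (filled_triangle P Q C) (F0 P Q C).
Proof.
  intros HP HQ HC. split; [apply F0_cont; auto|]. split.
  - unfold F0. pose proof (tmin_bounds P Q C 0). lra.
  - intro x. apply psi_F0; auto.
Qed.

Lemma int_valued_zero h : continuity h -> (forall x, exists k : Z, h x = IZR k) -> h 0 = 0 ->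
  forall x, h x = 0.
Proof.
  intros Hc Hi H0 x.
  assert (Hno : forall z, h z <> /2 /\ h z <> -/2).
  { intro z. destruct (Hi z) as [k Hk]. rewrite Hk. split; intro E.
    - assert (0 < IZR k < 1) by lra. destruct H as [Ha Hb']. apply lt_IZR in Ha. apply lt_IZR in Hb'. lia.
    - assert (-1 < IZR k < 0) by lra. destruct H as [Ha Hb']. apply lt_IZR in Ha. apply lt_IZR in Hb'. lia. }
  assert (Hb : -1 < h x < 1).
  { split; apply Rnot_le_lt; intro Hle.
    - set (g := fun t => h t + /2).
      assert (Hg : continuity g) by (unfold g; reg).
      destruct (Rle_dec 0 x).
      + destruct (IVT_cor g 0 x Hg r) as [z [_ Hz]]. unfold g; rewrite H0. nra. unfold g in Hz. apply (proj2 (Hno z)). lra.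
      + destruct (IVT_cor g x 0 Hg) as [z [_ Hz]]. lra. unfold g; rewrite H0. nra. unfold g in Hz. apply (proj2 (Hno z)). lra.
    - set (g := fun t => h t - /2).
      assert (Hg : continuity g) by (unfold g; reg).
      destruct (Rle_dec 0 x).
      + destruct (IVT_cor g 0 x Hg r) as [z [_ Hz]]. unfold g; rewrite H0. nra. unfold g in Hz. apply (proj1 (Hno z)). lra.
      + destruct (IVT_cor g x 0 Hg) as [z [_ Hz]]. lra. unfold g; rewrite H0. nra. unfold g in Hz. apply (proj1 (Hno z)). lra. }
  destruct (Hi x) as [k Hk]. rewrite Hk in *. apply IZR_strip. auto.
Qed.

Lemma lift_eq_F0 P Q C F : in_D P -> in_D Q -> in_D C ->
  is_lift_psi (filled_triangle P Q C) F -> forall x, F x = F0 P Q C x.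
Proof.
  intros HP HQ HC [Hc [H0 Hpsi]].
  assert (Hi : forall x, exists k : Z, F x - F0 P Q C x = IZR k).
  { intro x. apply circ_eq. apply psi_unique; auto. }
  assert (Hz : forall x, (fun x => F x - F0 P Q C x) x = 0).
  { apply int_valued_zero.
    - assert (continuity (F0 P Q C)) by (apply F0_cont; auto). reg.
    - exact Hi.
    - destruct (Hi 0) as [k Hk]. simpl. rewrite Hk. apply IZR_strip. rewrite <- Hk.
      unfold F0. pose proof (tmin_bounds P Q C 0). lra. }
  intro x. specialize (Hz x). simpl in Hz. lra.
Qed.

Lemma theta_shift_Z M x (k : Z) : theta M (x + IZR k) = theta M x.
Proof.
  pose proof (circ_shift_Z x k) as H. unfold circ in H.
  assert (Hc : cos (2*PI*(x + IZR k)) = cos (2*PI*x)) by (apply (f_equal fst) in H; exact H).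
  assert (Hs : sin (2*PI*(x + IZR k)) = sin (2*PI*x)) by (apply (f_equal snd) in H; exact H).
  unfold theta, rr. rewrite Hc, Hs. reflexivity.
Qed.

Lemma tmin_shift_Z P Q C x k : tmin P Q C (x + IZR k) = tmin P Q C x.
Proof. unfold tmin. rewrite !theta_shift_Z. reflexivity. Qed.

Lemma F0_shift1 P Q C x : F0 P Q C (x + 1) = F0 P Q C x + 1.
Proof. unfold F0. replace 1 with (IZR 1) by reflexivity. rewrite tmin_shift_Z. ring. Qed.

Definition G (M : pt) (x : R) : R := x + theta M x.

Lemma G_shift_Z M x k : G M (x + IZR k) = G M x + IZR k.
Proof. unfold G. rewrite theta_shift_Z. ring. Qed.

Lemma G_inj M a b : in_D M -> G M a = G M b -> a = b.
Proof.
  intros HM E.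
  assert (Hc : circ (G M a) = circ (G M b)) by (rewrite E; reflexivity).
  unfold G in Hc. rewrite !circ_theta in Hc by auto.
  apply (f_equal (sig M)) in Hc. rewrite !sig_invol in Hc by (auto; apply circ_S1).
  destruct (circ_eq _ _ Hc) as [k Hk].
  replace a with (b + IZR k) in E by lra. rewrite G_shift_Z in E.
  assert (IZR k = 0) by lra. lra.
Qed.

Lemma G_cont M : in_D M -> continuity (G M).
Proof.
  intro HM. intro x0. unfold G. apply (continuity_pt_plus (fun x => x) (theta M)).
  apply derivable_continuous_pt, derivable_pt_id. apply theta_cont; auto.
Qed.

Lemma G_incr M a b : in_D M -> a < b -> G M a < G M b.
Proof.
  intros HM Hab. destruct (Rtotal_order (G M a) (G M b)) as [H|[H|H]]; auto.
  - apply G_inj in H; auto; lra.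
  - exfalso.
    destruct (archimed (b - a)) as [Hu1 Hu2].
    set (k := up (b - a)) in *.
    assert (Hga : G M (a + IZR k) = G M a + IZR k) by apply G_shift_Z.
    assert (Hk : 0 < IZR k) by lra.
    set (g := fun t => G M t - G M a).
    assert (Hg : continuity g) by (unfold g; assert (continuity (G M)) by (apply G_cont; auto); reg).
    destruct (IVT g b (a + IZR k) Hg) as [z [Hz1 Hz2]].
    + lra.
    + unfold g; lra.
    + unfold g; lra.
    + unfold g in Hz2. assert (G M z = G M a) by lra. apply G_inj in H0; auto. lra.
Qed.

Lemma F0_mono P Q C a b : in_D P -> in_D Q -> in_D C -> a <= b -> F0 P Q C a <= F0 P Q C b.
Proof.
  intros HP HQ HC Hab. destruct (Rle_lt_or_eq_dec _ _ Hab) as [Hlt|Heq]; [|subst; lra].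
  destruct (tmin_cases P Q C a) as [_ [Ha1 [Ha2 Ha3]]].
  destruct (tmin_cases P Q C b) as [[E|[E|E]] _]; unfold F0; rewrite E.
  - pose proof (G_incr P a b HP Hlt). unfold G in H. lra.
  - pose proof (G_incr Q a b HQ Hlt). unfold G in H. lra.
  - pose proof (G_incr C a b HC Hlt). unfold G in H. lra.
Qed.

Lemma Rabs_le_between a b : Rabs a <= b -> - b <= a <= b.
Proof. intro H. pose proof (Rle_abs a). pose proof (Rle_abs (-a)). rewrite Rabs_Ropp in H1. lra. Qed.

Section Rot.
Variable F : R -> R.
Hypothesis Fmono : forall a b, a <= b -> F a <= F b.
Hypothesis Fshift : forall x, F (x + 1) = F x + 1.
Hypothesis Fstep : forall x, 0 < F x - x < 1.

Lemma F_shift_nat x (j : nat) : F (x + INR j) = F x + INR j.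
Proof.
  induction j as [|j IHj]. - simpl. rewrite !Rplus_0_r; reflexivity.
  - rewrite S_INR. replace (x + (INR j + 1)) with ((x + INR j) + 1) by ring. rewrite Fshift, IHj. ring.
Qed.

Lemma iter_shift n x (j : nat) : Nat.iter n F (x + INR j) = Nat.iter n F x + INR j.
Proof. induction n; simpl; [reflexivity|]. rewrite IHn. apply F_shift_nat. Qed.

Lemma iter_mono n a b : a <= b -> Nat.iter n F a <= Nat.iter n F b.
Proof. intro H. induction n; simpl; auto. Qed.

Lemma iter_bounds n x : x <= Nat.iter n F x <= x + INR n.
Proof.
  induction n as [|n IHn]. - simpl. lra.
  - rewrite Nat.iter_succ. pose proof (Fstep (Nat.iter n F x)). rewrite S_INR. lra.
Qed.

Variable x0 : R.
Hypothesis Hper : Nat.iter 5 F x0 = x0 + 2.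

Lemma iter_5m m : Nat.iter (5 * m) F x0 = x0 + 2 * INR m.
Proof.
  induction m.
  - simpl. ring.
  - replace (5 * S m)%nat with (5 + 5 * m)%nat by lia. rewrite Nat.iter_add, IHm.
    replace (2 * INR m) with (INR (2 * m)) by (rewrite mult_INR; simpl; ring).
    rewrite iter_shift, Hper, !mult_INR, (S_INR m). simpl. ring.
Qed.

Lemma iter_x0_bound n : Rabs (Nat.iter n F x0 - x0 - 2 * INR n / 5) <= 3.
Proof.
  rewrite (Nat.div_mod n 5) by lia. set (m := (n / 5)%nat). set (r := (n mod 5)%nat).
  assert (Hr : (r < 5)%nat) by (apply Nat.mod_upper_bound; lia).
  rewrite Nat.add_comm, Nat.iter_add, iter_5m.
  replace (2 * INR m) with (INR (2 * m)) by (rewrite mult_INR; simpl; ring).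
  rewrite iter_shift. rewrite plus_INR, !mult_INR.
  pose proof (iter_bounds r x0). assert (INR r <= 4) by (replace 4 with (INR 4) by (simpl; ring); apply le_INR; lia).
  pose proof (pos_INR r).
  simpl. apply Rabs_le. lra.
Qed.

Lemma rot_conv x : Un_cv (fun n => (Nat.iter n F x - x) / INR n) (2/5).
Proof.
  destruct (archimed (Rabs (x - x0))) as [Hu _].
  set (j := Z.to_nat (up (Rabs (x - x0)))).
  assert (Hj : Rabs (x - x0) <= INR j).
  { unfold j. rewrite INR_IZR_INZ, Z2Nat.id. lra. apply le_IZR. pose proof (Rabs_pos (x - x0)). lra. }
  apply Rabs_le_between in Hj.
  set (B := 2 * INR j + 3).
  assert (Hbound : forall n, Rabs (Nat.iter n F x - x - 2 * INR n / 5) <= B).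
  { intro n. pose proof (iter_x0_bound n) as Hx0. apply Rabs_le_between in Hx0.
    assert (H1 : Nat.iter n F x <= Nat.iter n F x0 + INR j) by (rewrite <- iter_shift; apply iter_mono; lra).
    assert (H2 : Nat.iter n F x0 - INR j <= Nat.iter n F x).
    { assert (E : Nat.iter n F x0 = Nat.iter n F (x0 - INR j) + INR j) by (rewrite <- iter_shift; f_equal; ring).
      assert (Nat.iter n F (x0 - INR j) <= Nat.iter n F x) by (apply iter_mono; lra). lra. }
    apply Rabs_le. unfold B. lra. }
  intros eps Heps.
  assert (HB : 0 <= B) by (unfold B; pose proof (pos_INR j); lra).
  destruct (archimed (B / eps)) as [Hn _].
  exists (S (Z.to_nat (up (B / eps)))). intros n Hn'.
  assert (Hnpos : 0 < INR n) by (apply lt_0_INR; lia).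
  assert (HnB : B / eps < INR n).
  { apply le_INR in Hn'. rewrite S_INR, INR_IZR_INZ, Z2Nat.id in Hn'. lra.
    apply le_IZR. assert (0 <= B / eps) by (apply Rmult_le_pos; [lra | left; apply Rinv_0_lt_compat; lra]). lra. }
  unfold R_dist.
  replace ((Nat.iter n F x - x) / INR n - 2 / 5) with ((Nat.iter n F x - x - 2 * INR n / 5) / INR n) by (field; lra).
  unfold Rdiv at 1. rewrite Rabs_mult, Rabs_inv, (Rabs_right (INR n)) by lra.
  apply Rle_lt_trans with (B * / INR n).
  - apply Rmult_le_compat_r; [left; apply Rinv_0_lt_compat; lra|]. apply Hbound.
  - apply (Rmult_lt_reg_r (INR n)); [lra|]. rewrite Rmult_assoc, Rinv_l by lra.
    apply (Rmult_lt_reg_r (/ eps)); [apply Rinv_0_lt_compat; lra|].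
    replace (B * 1 * / eps) with (B / eps) by (unfold Rdiv; ring).
    replace (eps * INR n * / eps) with (INR n) by (field; lra). lra.
Qed.
End Rot.

Lemma sq_norm_pos_neq X Y : X <> Y -> 0 < sq_norm (psub Y X).
Proof.
  intro H. destruct X as [x1 x2], Y as [y1 y2]. unfold sq_norm, psub; simpl.
  destruct (Req_dec x1 y1); destruct (Req_dec x2 y2); subst; try (exfalso; auto; fail); nra.
Qed.

Lemma sqrt_scale k a : 0 <= a -> sqrt (k * k * a) = Rabs k * sqrt a.
Proof.
  intro Ha. rewrite sqrt_mult_alt by (apply Rle_0_sqr). change (k*k) with (Rsqr k). rewrite sqrt_Rsqr_abs. reflexivity.
Qed.

Lemma edist_scale X D t s : edist (padd X (pscale t D)) (padd X (pscale s D)) = Rabs (t - s) * sqrt (sq_norm D).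
Proof.
  unfold edist. rewrite <- sqrt_scale by (destruct D; unfold sq_norm; simpl; nra).
  f_equal. destruct X, D; unfold sq_norm, psub, padd, pscale; simpl; ring.
Qed.

Lemma dprime_formula X Y : in_D X -> in_D Y -> X <> Y ->
  exists t1 t2, t1 < 0 /\ 1 < t2 /\
    on_S1 (padd X (pscale t1 (psub Y X))) /\ on_S1 (padd X (pscale t2 (psub Y X))) /\
    exp (2 * dprime X Y) = (1 - t1) * t2 / ((- t1) * (t2 - 1)) /\
    t1 * t2 = (sq_norm X - 1) / sq_norm (psub Y X) /\
    (1 - t1) * (1 - t2) = (sq_norm Y - 1) / sq_norm (psub Y X) /\
    (t2 - t1) * (t2 - t1) = 4 * ((1 - dot X Y)^2 - (1 - sq_norm X) * (1 - sq_norm Y)) / (sq_norm (psub Y X))^2.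
Proof.
  intros HX HY Hne.
  pose proof (sq_norm_pos_neq X Y Hne) as Ha.
  set (a := sq_norm (psub Y X)) in *.
  set (b := 2 * dot X (psub Y X)). set (c := sq_norm X - 1).
  assert (Hc : c < 0) by (unfold c, in_D in *; lra).
  set (Dl := b * b - 4 * a * c).
  assert (HD : 0 < Dl) by (unfold Dl; nra).
  set (sD := sqrt Dl).
  assert (HsD : sD * sD = Dl) by (apply sqrt_sqrt; lra).
  assert (HsD0 : 0 < sD) by (apply sqrt_lt_R0; lra).
  set (t1 := (- b + -1 * sD) / (2 * a)). set (t2 := (- b + 1 * sD) / (2 * a)).
  assert (Hroot : forall t, t = t1 \/ t = t2 -> a * t * t + b * t + c = 0).
  { intros t [-> | ->]; unfold t1, t2; field_simplify; try lra; rewrite ?Rmult_1_l;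
    replace (sD ^ 2) with Dl by (rewrite <- HsD; ring); unfold Dl; field; lra. }
  assert (Hb2 : sD > Rabs b).
  { apply Rsqr_incrst_0; [| apply Rabs_pos | lra]. rewrite <- Rsqr_abs. unfold Rsqr. rewrite HsD. unfold Dl. nra. }
  assert (Ht1 : t1 < 0).
  { assert (E: t1 * (2*a) = -b + -1*sD) by (unfold t1; field; lra).
    pose proof (Rle_abs (-b)) as Hab; rewrite Rabs_Ropp in Hab. nra. }
  assert (Hsum : a + b + c = sq_norm Y - 1).
  { unfold a, b, c. destruct X, Y. unfold sq_norm, dot, psub; simpl. ring. }
  assert (Ht2 : 1 < t2).
  { unfold t2. apply (Rmult_lt_reg_r (2*a)); [lra|]. field_simplify; [|lra].
    destruct (Rle_dec (2*a+b) 0). lra.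
    assert ((2*a+b)*(2*a+b) < sD * sD). { rewrite HsD. unfold Dl. unfold in_D in HY. nra. }
    assert (0 < 2*a+b) by lra. nra. }
  assert (HS1 : forall t, t = t1 \/ t = t2 -> on_S1 (padd X (pscale t (psub Y X)))).
  { intros t Ht. pose proof (Hroot t Ht). unfold on_S1.
    transitivity (a * t * t + b * t + c + 1); [|lra].
    unfold a, b, c. destruct X, Y. unfold sq_norm, dot, psub, padd, pscale; simpl. ring. }
  exists t1, t2. split; auto. split; auto. split; [apply HS1; auto|]. split; [apply HS1; auto|].
  assert (Hprod : t1 * t2 = c / a).
  { unfold t1, t2. replace ((-b + -1*sD)/(2*a) * ((-b + 1*sD)/(2*a))) with ((b*b - sD*sD)/(4*a*a)) by (field; lra).
    rewrite HsD. unfold Dl. field. lra. }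
  assert (Hsum2 : t1 + t2 = - b / a) by (unfold t1, t2; field; lra).
  assert (Hdiff : (t2 - t1) * (t2 - t1) = Dl / (a * a)).
  { unfold t1, t2. replace (((-b + 1*sD)/(2*a) - (-b + -1*sD)/(2*a)) * ((-b + 1*sD)/(2*a) - (-b + -1*sD)/(2*a))) with (sD*sD/(a*a)) by (field; lra).
    rewrite HsD. reflexivity. }
  split.
  - unfold dprime. destruct (Rle_dec (sq_norm (psub Y X)) 0) as [Hle|_]; [fold a in Hle; lra|].
    fold a b c. unfold chord_end1, chord_end2, chord_t. fold a b c Dl sD. fold t1 t2.
    assert (E1 : Y = padd X (pscale 1 (psub Y X))) by (destruct X, Y; unfold padd, pscale, psub; simpl; f_equal; ring).
    assert (E0 : X = padd X (pscale 0 (psub Y X))) by (destruct X, Y; unfold padd, pscale, psub; simpl; f_equal; ring).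
    assert (e1 := edist_scale X (psub Y X) t1 1). rewrite <- E1 in e1.
    assert (e2 := edist_scale X (psub Y X) t2 0). rewrite <- E0 in e2.
    assert (e3 := edist_scale X (psub Y X) t1 0). rewrite <- E0 in e3.
    assert (e4 := edist_scale X (psub Y X) t2 1). rewrite <- E1 in e4.
    rewrite e1, e2, e3, e4. fold a.
    set (sa := sqrt a). assert (Hsa : 0 < sa) by (apply sqrt_lt_R0; lra).
    rewrite (Rabs_left (t1 - 1)) by lra. rewrite (Rabs_right (t2 - 0)) by lra.
    rewrite (Rabs_left (t1 - 0)) by lra. rewrite (Rabs_right (t2 - 1)) by lra.
    set (rho := (1 - t1) * t2 / (- t1 * (t2 - 1))).
    assert (Hrho : - (t1 - 1) * sa * ((t2 - 0) * sa) / (- (t1 - 0) * sa * ((t2 - 1) * sa)) = rho).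
    { unfold rho. field. repeat split; lra. }
    rewrite Hrho.
    assert (Hrho1 : 1 < rho).
    { unfold rho. apply (Rmult_lt_reg_r (- t1 * (t2 - 1))); [nra|]. field_simplify; nra. }
    rewrite Rabs_right by (left; rewrite <- ln_1; apply ln_increasing; lra).
    replace (2 * (/ 2 * ln rho)) with (ln rho) by field. apply exp_ln. lra.
  - split; [rewrite Hprod; reflexivity|]. split.
    + replace ((1 - t1) * (1 - t2)) with (1 - (t1 + t2) + t1 * t2) by ring. rewrite Hprod, Hsum2.
      rewrite <- Hsum. field. lra.
    + rewrite Hdiff. unfold Dl, a, b, c. destruct X as [x1 x2], Y as [y1 y2].
      unfold sq_norm, dot, psub; simpl. field. unfold a, sq_norm, psub in Ha; simpl in Ha. lra.
Qed.

Definition hfun (r : R) : R := (r - 1) * (r - 1) / r.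

Lemma hfun_mono r1 r2 : 1 <= r1 -> r1 <= r2 -> hfun r1 <= hfun r2.
Proof.
  intros H1 H2. unfold hfun.
  apply Rle_trans with ((r2-1)*(r2-1)/r2 - (r2 - r1) * (1 - /(r1*r2))).
  - right. field. lra.
  - assert (0 <= (r2 - r1) * (1 - / (r1 * r2))).
    { apply Rmult_le_pos; [lra|]. assert (1 <= r1*r2) by nra.
      assert (/ (r1*r2) <= 1). { rewrite <- Rinv_1. apply Rinv_le_contravar; lra. } lra. }
    lra.
Qed.

Definition Hq (X Y : pt) : R := (1 - dot X Y)^2 - (1 - sq_norm X) * (1 - sq_norm Y).

Lemma hfun_dprime X Y : in_D X -> in_D Y -> X <> Y ->
  hfun (exp (2 * dprime X Y)) = 4 * Hq X Y / ((1 - sq_norm X) * (1 - sq_norm Y)).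
Proof.
  intros HX HY Hne.
  destruct (dprime_formula X Y HX HY Hne) as [t1 [t2 [H1 [H2 [_ [_ [E [Ep [Eq Ed]]]]]]]]].
  rewrite E. pose proof (sq_norm_pos_neq X Y Hne) as Ha. set (a := sq_norm (psub Y X)) in *.
  unfold in_D in *.
  unfold hfun.
  transitivity ((t2 - t1) * (t2 - t1) / ((t1 * t2) * ((1 - t1) * (1 - t2)))).
  - field. repeat split; nra.
  - rewrite Ed, Ep, Eq. unfold Hq. field. repeat split; lra.
Qed.

Lemma exp_le a b : a <= b -> exp a <= exp b.
Proof. intro H. destruct (Rle_lt_or_eq_dec _ _ H) as [H'|H']; [left; apply exp_increasing; auto | right; subst; auto]. Qed.

Lemma dprime_nonneg X Y : in_D X -> in_D Y -> 0 <= dprime X Y.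
Proof.
  intros HX HY. unfold dprime. destruct (Rle_dec _ _); [lra|].
  apply Rmult_le_pos; [lra|apply Rabs_pos].
Qed.

Lemma dprime_exp_ge1 X Y : in_D X -> in_D Y -> 1 <= exp (2 * dprime X Y).
Proof.
  intros. pose proof (dprime_nonneg X Y H H0). rewrite <- exp_0.
  destruct (Req_dec (dprime X Y) 0) as [E|E]. rewrite E; right; f_equal; ring.
  left; apply exp_increasing; lra.
Qed.

Lemma collinear_param P Q S : P <> Q -> cross P Q S = 0 ->
  S = padd P (pscale (dot (psub S P) (psub Q P) / sq_norm (psub Q P)) (psub Q P)).
Proof.
  intros Hne Hc. pose proof (sq_norm_pos_neq P Q Hne) as Ha.
  destruct P as [p1 p2], Q as [q1 q2], S as [s1 s2].
  unfold cross, sq_norm, dot, psub, padd, pscale in *; simpl in *.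
  set (N := (q1 - p1) * (q1 - p1) + (q2 - p2) * (q2 - p2)) in *.
  set (X := (s1 - p1) * (q1 - p1) + (s2 - p2) * (q2 - p2)).
  assert (E1 : X * (q1 - p1) = (s1 - p1) * N).
  { transitivity ((s1 - p1) * N + (q2 - p2) * ((q1 - p1) * (s2 - p2) - (q2 - p2) * (s1 - p1))); [unfold X, N; ring|].
    rewrite Hc. ring. }
  assert (E2 : X * (q2 - p2) = (s2 - p2) * N).
  { transitivity ((s2 - p2) * N - (q1 - p1) * ((q1 - p1) * (s2 - p2) - (q2 - p2) * (s1 - p1))); [unfold X, N; ring|].
    rewrite Hc. ring. }
  f_equal.
  - replace (X / N * (q1 - p1)) with ((X * (q1 - p1)) / N) by (field; lra). rewrite E1. field. lra.
  - replace (X / N * (q2 - p2)) with ((X * (q2 - p2)) / N) by (field; lra). rewrite E2. field. lra.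
Qed.

Lemma unit_chord_norm A B s : on_S1 A -> on_S1 B ->
  sq_norm (padd A (pscale s (psub B A))) = 1 - s * (1 - s) * sq_norm (psub B A).
Proof.
  destruct A as [a1 a2], B as [b1 b2]. unfold on_S1, sq_norm, padd, pscale, psub; simpl. intros HA HB.
  transitivity ((1-s)^2*(a1*a1+a2*a2) + 2*s*(1-s)*(a1*b1+a2*b2) + s^2*(b1*b1+b2*b2)); [ring|].
  transitivity (1 - s*(1-s)*((a1*a1+a2*a2) + (b1*b1+b2*b2) - 2*(a1*b1+a2*b2))); [|ring].
  rewrite HA, HB. ring.
Qed.

Lemma cond_from_delta P Q C : in_D P -> in_D Q -> in_D C -> P <> Q -> 0 < cross P Q C ->
  delta_is P Q C (/ 2 * Deltaprime 1 P Q) ->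
  exists A B p q, on_S1 A /\ on_S1 B /\ A <> B /\ 0 < p /\ p < q /\ q < 1 /\
    P = padd A (pscale p (psub B A)) /\ Q = padd A (pscale q (psub B A)) /\
    4 * (1 - dot C A) * (1 - dot C B) * (q - p) = q * (1 - p) * (1 - sq_norm C) * sq_norm (psub B A).
Proof.
  intros HP HQ HC HPQ Hor [[S0 [HS0 Hm0]] Hmin].
  destruct (dprime_formula P Q HP HQ HPQ) as [t1 [t2 [Ht1 [Ht2 [HA [HB [Erho _]]]]]]].
  pose proof (sq_norm_pos_neq P Q HPQ) as HD.
  set (A := padd P (pscale t1 (psub Q P))) in *. set (B := padd P (pscale t2 (psub Q P))) in *.
  set (p := - t1 / (t2 - t1)). set (q := (1 - t1) / (t2 - t1)).
  assert (HT : 0 < t2 - t1) by lra.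
  assert (EP : P = padd A (pscale p (psub B A))).
  { unfold A, B, p. destruct P, Q. unfold padd, pscale, psub; simpl. f_equal; field; lra. }
  assert (EQ : Q = padd A (pscale q (psub B A))).
  { unfold A, B, q. destruct P, Q. unfold padd, pscale, psub; simpl. f_equal; field; lra. }
  assert (HL : sq_norm (psub B A) = (t2 - t1) * (t2 - t1) * sq_norm (psub Q P)).
  { unfold A, B. destruct P, Q. unfold sq_norm, padd, pscale, psub; simpl. ring. }
  set (L := sq_norm (psub B A)) in *.
  assert (HLp : 0 < L) by (rewrite HL; apply Rmult_lt_0_compat; [apply Rmult_lt_0_compat; lra | exact HD]).
  assert (HAB : A <> B) by (intro E; assert (L = 0) by (unfold L; rewrite E; unfold sq_norm, psub; simpl; ring); lra).
  assert (Hp : 0 < p) by (unfold p; apply Rdiv_lt_0_compat; lra).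
  assert (Hpq : p < q) by (unfold p, q; apply Rmult_lt_compat_r; [apply Rinv_0_lt_compat; lra | lra]).
  assert (Hq1 : q < 1) by (unfold q; apply (Rmult_lt_reg_r (t2 - t1)); [lra|]; field_simplify; lra).
  exists A, B, p, q. do 8 (split; auto).
  set (m := / 2 * Deltaprime 1 P Q) in *.
  set (d := dprime P Q) in *.
  set (rho := (1 - t1) * t2 / (- t1 * (t2 - 1))) in *.
  assert (Hrho : rho - 1 = (q - p) / (p * (1 - q))).
  { unfold rho, p, q. field. repeat split; lra. }
  assert (Hrho1 : 1 < rho).
  { assert (0 < (q - p) / (p * (1 - q))) by (apply Rdiv_lt_0_compat; [lra|]; apply Rmult_lt_0_compat; lra). lra. }
  set (e := exp d).
  assert (He2 : e * e = rho) by (unfold e; rewrite <- exp_plus; rewrite <- Erho; f_equal; ring).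
  assert (He : 1 < e).
  { unfold e. rewrite <- exp_0. apply exp_increasing.
    destruct (Rle_dec d 0); [|lra]. exfalso.
    assert (exp (2*d) <= 1). { rewrite <- exp_0. destruct (Req_dec (2*d) 0) as [E|E]; [rewrite E; lra|]. left; apply exp_increasing; lra. }
    lra. }
  assert (Hm2 : exp (2 * m) = (e + 1) / (e - 1)).
  { unfold m, Deltaprime. replace (INR 1) with 1 by reflexivity. rewrite Rmult_1_l. fold d e.
    replace (2 * (/2 * ln ((e + 1) / (e - 1)))) with (ln ((e + 1) / (e - 1))) by field.
    apply exp_ln. apply Rdiv_lt_0_compat; lra. }
  assert (Hhm : hfun (exp (2 * m)) = 4 * p * (1 - q) / (q - p)).
  { rewrite Hm2. unfold hfun.
    replace (((e + 1) / (e - 1) - 1) * ((e + 1) / (e - 1) - 1) / ((e + 1) / (e - 1))) with (4 / (e * e - 1)) by (field; repeat split; lra).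
    rewrite He2. replace (rho - 1 + 1 - 1) with (rho - 1) by ring.
    replace (rho - 1) with ((q - p) / (p * (1 - q))) by (rewrite <- Hrho; ring).
    field. repeat split; lra. }
  assert (Hm1 : 1 <= exp (2 * m)).
  { rewrite Hm2. apply (Rmult_le_reg_r (e - 1)); [lra|]. field_simplify; lra. }
  assert (Halpha : 0 < 1 - dot C A).
  { pose proof (dot_lt1 A C HA HC). destruct A, C; unfold dot in *; simpl in *. lra. }
  assert (Hbeta : 0 < 1 - dot C B).
  { pose proof (dot_lt1 B C HB HC). destruct B, C; unfold dot in *; simpl in *. lra. }
  set (al := 1 - dot C A) in *. set (be := 1 - dot C B) in *.
  set (nC := 1 - sq_norm C).
  assert (HnC : 0 < nC) by (unfold nC; unfold in_D in HC; lra).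
  assert (HCS : forall S, on_chord P Q S -> C <> S).
  { intros S [_ HS] E. subst S. lra. }
  assert (Hval : forall s, 0 < s < 1 ->
     hfun (exp (2 * dprime C (padd A (pscale s (psub B A)))))
     = 4 * ((1 - s) * al + s * be)^2 / (nC * (s * (1 - s) * L)) - 4).
  { intros s Hs. set (S := padd A (pscale s (psub B A))).
    assert (HSn : sq_norm S = 1 - s * (1 - s) * L) by (apply unit_chord_norm; auto).
    assert (HSD : in_D S) by (unfold in_D; rewrite HSn; assert (0 < s*(1-s)) by nra; nra).
    assert (HSc : on_chord P Q S).
    { split; auto. rewrite EP, EQ. unfold S. destruct A, B. unfold cross, padd, pscale, psub; simpl. ring. }
    rewrite hfun_dprime; auto. unfold Hq. fold nC. rewrite HSn.
    replace (1 - dot C S) with ((1 - s) * al + s * be) by (unfold al, be, S; destruct A, B, C; unfold dot, padd, pscale, psub; simpl; ring).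
    field. assert (0 < s*(1-s)) by nra. split; nra. }
  assert (Hchord : forall S, on_chord P Q S -> exists s, 0 < s < 1 /\ S = padd A (pscale s (psub B A))).
  { intros S [HSD HS]. pose proof (collinear_param P Q S HPQ HS) as ES.
    set (mu := dot (psub S P) (psub Q P) / sq_norm (psub Q P)) in *.
    exists ((mu - t1) / (t2 - t1)).
    assert (ES' : S = padd A (pscale ((mu - t1) / (t2 - t1)) (psub B A))).
    { rewrite ES. unfold A, B. destruct P, Q. unfold padd, pscale, psub; simpl. f_equal; field; lra. }
    split; auto.
    pose proof (unit_chord_norm A B ((mu - t1) / (t2 - t1)) HA HB) as Hn. rewrite <- ES' in Hn. fold L in Hn.
    unfold in_D in HSD. rewrite Hn in HSD.
    set (s := (mu - t1) / (t2 - t1)) in *.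
    assert (0 < s * (1 - s)) by nra. split; nra. }
  set (sst := al / (al + be)).
  assert (Hsst : 0 < sst < 1).
  { unfold sst. split; [apply Rdiv_lt_0_compat; lra|]. apply (Rmult_lt_reg_r (al + be)); [lra|]. field_simplify; lra. }
  set (Sst := padd A (pscale sst (psub B A))).
  assert (HSst : on_chord P Q Sst).
  { split.
    - unfold in_D, Sst. rewrite unit_chord_norm by auto. fold L. assert (0 < sst*(1-sst)) by nra. nra.
    - rewrite EP, EQ. unfold Sst. destruct A, B. unfold cross, padd, pscale, psub; simpl. ring. }
  set (gst := 16 * al * be / (nC * L) - 4).
  assert (Hgst : hfun (exp (2 * dprime C Sst)) = gst).
  { unfold Sst. rewrite Hval by auto. unfold gst, sst. field. repeat split; lra. }
  assert (Hlow : forall s, 0 < s < 1 -> gst <= hfun (exp (2 * dprime C (padd A (pscale s (psub B A)))))).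
  { intros s Hs. rewrite Hval by auto. unfold gst.
    assert (Hss : 0 < s * (1 - s)) by nra.
    assert (4 * s * (1 - s) * al * be <= ((1 - s) * al + s * be)^2) by (pose proof (pow2_ge_0 ((1-s)*al - s*be)); nra).
    apply Rplus_le_compat_r.
    replace (16*al*be/(nC*L)) with (4*(4*s*(1-s)*al*be) / (nC*(s*(1-s)*L))) by (field; repeat split; lra).
    assert (0 < nC*(s*(1-s)*L)) by (apply Rmult_lt_0_compat; [lra|]; apply Rmult_lt_0_compat; lra).
    unfold Rdiv. apply Rmult_le_compat_r; [left; apply Rinv_0_lt_compat; lra| lra]. }
  assert (Hup : hfun (exp (2 * m)) <= gst).
  { rewrite <- Hgst. apply hfun_mono; auto. apply exp_le. pose proof (Hmin Sst HSst). fold m in H. lra. }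
  assert (Hdown : gst <= hfun (exp (2 * m))).
  { destruct (Hchord S0 HS0) as [s [Hs ES]]. rewrite <- Hm0. rewrite ES. apply Hlow; auto. }
  assert (Eg : 4 * p * (1 - q) / (q - p) = 16 * al * be / (nC * L) - 4) by (rewrite <- Hhm; unfold gst in *; lra).
  assert (E4 : 16 * al * be = 4 * q * (1 - p) / (q - p) * (nC * L)).
  { assert (E3 : 16 * al * be / (nC * L) = 4 * q * (1 - p) / (q - p)).
    { replace (4 * q * (1 - p) / (q - p)) with (4 * p * (1 - q) / (q - p) + 4) by (field; lra). lra. }
    rewrite <- E3. field. split; lra. }
  fold L. transitivity (16 * al * be * (q - p) / 4); [field|]. rewrite E4. field. lra.
Qed.

Definition Psi (X0 Y P Q : pt) : R :=
  cross X0 Y Q * sq_norm (psub P Y) + 2 * (1 - dot Y P) * (cross X0 P Q - cross X0 Y Q).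

Lemma closure_norm (v c1 c2 p q : R) :
  c1 * c1 + c2 * c2 < 1 -> 0 < q < 1 ->
  let A := (1,0) in let B := ((v*v-1)/(v*v+1), 2*v/(v*v+1)) in let C := (c1,c2) in
  4 * (1 - dot C A) * (1 - dot C B) * (q - p) = q * (1 - p) * (1 - sq_norm C) * sq_norm (psub B A) ->
  let P := padd A (pscale p (psub B A)) in let Q := padd A (pscale q (psub B A)) in
  Psi (sig C A) (sig C B) P Q = 0.
Proof.
  intros HC Hq A B C Hcond P Q.
  set (nC := 1 - (c1*c1+c2*c2)). set (bt := v*v+1 - c1*(v*v-1) - 2*c2*v).
  assert (Hv : 0 < v*v+1) by nra.
  assert (HnC : 0 < nC) by (unfold nC; lra).
  assert (Hc' : (1 - c1) * bt * (q - p) = q * (1 - p) * nC).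
  { assert (E : 4 * (1 - dot C A) * (1 - dot C B) * (q - p) = 4 * ((1 - c1) * bt * (q - p)) / (v*v+1)).
    { unfold A, B, C, dot, bt; simpl. field. lra. }
    assert (E' : q * (1 - p) * (1 - sq_norm C) * sq_norm (psub B A) = 4 * (q * (1 - p) * nC) / (v*v+1)).
    { unfold A, B, C, sq_norm, psub, nC; simpl. field. lra. }
    rewrite E, E' in Hcond. apply (Rmult_eq_reg_r (4 / (v*v+1))); [|apply Rgt_not_eq; apply Rdiv_lt_0_compat; lra].
    unfold Rdiv in *. lra. }
  set (Dd := q * nC - (1 - c1) * bt).
  assert (HDd : Dd <> 0).
  { intro E. assert (Hp : p * Dd = q * (nC - (1 - c1) * bt)) by (unfold Dd; nra).
    rewrite E, Rmult_0_r in Hp. assert (nC - (1 - c1) * bt = 0) by (symmetry in Hp; apply Rmult_integral in Hp; destruct Hp; lra).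
    assert (q*nC = (1-c1)*bt) by (unfold Dd in E; lra).
    assert (0 < (1-q)*nC) by (apply Rmult_lt_0_compat; lra). lra. }
  assert (Hp : p = q * (nC - (1 - c1) * bt) / Dd).
  { apply (Rmult_eq_reg_r Dd); auto. unfold Rdiv. rewrite Rmult_assoc, Rinv_l by auto. unfold Dd. nra. }
  subst P Q. rewrite Hp. unfold Dd, nC, bt in *. unfold A, B, C.
  unfold Psi, sig, padd, pscale, psub, dot, sq_norm, cross; simpl.
  field. split; [nra|]. split; [lra|]. split; [|exact HDd].
  intro E.
  destruct (Rplus_sqr_eq_0 (c1 * (v * v + 1) - (v * v - 1)) (c2 * (v * v + 1) - 2 * v) E) as [E1 E2].
  assert (E3 : (c1 * c1 + c2 * c2) * ((v*v+1)*(v*v+1)) = (v*v+1)*(v*v+1)).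
  { replace ((c1 * c1 + c2 * c2) * ((v*v+1)*(v*v+1))) with ((c1 * (v*v+1))^2 + (c2*(v*v+1))^2) by ring.
    replace (c1 * (v*v+1)) with (v*v-1) by lra. replace (c2 * (v*v+1)) with (2*v) by lra. ring. }
  assert (0 < (v*v+1)*(v*v+1)) by nra. nra.
Qed.

Definition rot (a w : pt) : pt := (fst a * fst w + snd a * snd w, - snd a * fst w + fst a * snd w).

Section Rot.
Variable a : pt.
Hypothesis Ha : on_S1 a.
Let Ha' : fst a * fst a + snd a * snd a = 1.
Proof. exact Ha. Qed.

Lemma rot_dot u w : dot (rot a u) (rot a w) = dot u w.
Proof.
  unfold rot, dot; simpl. transitivity ((fst a * fst a + snd a * snd a) * (fst u * fst w + snd u * snd w)); [ring|].
  rewrite Ha'. ring.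
Qed.
Lemma rot_sqn u : sq_norm (rot a u) = sq_norm u.
Proof. apply rot_dot. Qed.
Lemma rot_psub u w : rot a (psub u w) = psub (rot a u) (rot a w).
Proof. unfold rot, psub; simpl; f_equal; ring. Qed.
Lemma rot_padd u w : rot a (padd u w) = padd (rot a u) (rot a w).
Proof. unfold rot, padd; simpl; f_equal; ring. Qed.
Lemma rot_pscale k u : rot a (pscale k u) = pscale k (rot a u).
Proof. unfold rot, pscale; simpl; f_equal; ring. Qed.
Lemma rot_cross o u w : cross (rot a o) (rot a u) (rot a w) = cross o u w.
Proof.
  unfold rot, cross; simpl.
  transitivity ((fst a * fst a + snd a * snd a) * ((fst u - fst o) * (snd w - snd o) - (snd u - snd o) * (fst w - fst o))); [ring|].
  rewrite Ha'. ring.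
Qed.
Lemma rot_sig M v : rot a (sig M v) = sig (rot a M) (rot a v).
Proof.
  unfold sig. rewrite rot_padd, rot_pscale, rot_psub, rot_dot. rewrite <- rot_psub, rot_sqn. reflexivity.
Qed.
Lemma rot_self : rot a a = (1, 0).
Proof. unfold rot; simpl. f_equal; [exact Ha' | ring]. Qed.
Lemma rot_Psi X0 Y P Q : Psi (rot a X0) (rot a Y) (rot a P) (rot a Q) = Psi X0 Y P Q.
Proof. unfold Psi. rewrite !rot_cross, rot_dot, <- rot_psub, rot_sqn. reflexivity. Qed.
Lemma rot_inv w : rot (fst a, - snd a) (rot a w) = w.
Proof.
  destruct w as [w1 w2]. unfold rot; simpl. f_equal.
  - transitivity ((fst a * fst a + snd a * snd a) * w1); [ring|]. rewrite Ha'; ring.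
  - transitivity ((fst a * fst a + snd a * snd a) * w2); [ring|]. rewrite Ha'; ring.
Qed.
End Rot.

Lemma closure A B C p q : on_S1 A -> on_S1 B -> A <> B -> in_D C -> 0 < q < 1 ->
  4 * (1 - dot C A) * (1 - dot C B) * (q - p) = q * (1 - p) * (1 - sq_norm C) * sq_norm (psub B A) ->
  Psi (sig C A) (sig C B) (padd A (pscale p (psub B A))) (padd A (pscale q (psub B A))) = 0.
Proof.
  intros HA HB HAB HC Hq Hcond.
  rewrite <- (rot_Psi A HA). rewrite !rot_sig by auto. rewrite !rot_padd, !rot_pscale, !rot_psub, rot_self by auto.
  assert (HB' : on_S1 (rot A B)) by (unfold on_S1; rewrite rot_sqn; auto).
  destruct (rot A B) as [b1 b2] eqn:EB.
  assert (Hb1 : b1 <> 1).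
  { intro E. subst b1. unfold on_S1, sq_norm in HB'; simpl in HB'. assert (b2 = 0) by nra. subst b2.
    apply HAB. rewrite <- (rot_inv A HA A), <- (rot_inv A HA B), EB, rot_self by auto. reflexivity. }
  set (v := b2 / (1 - b1)).
  assert (Ebv : (b1, b2) = ((v*v-1)/(v*v+1), 2*v/(v*v+1))).
  { unfold on_S1, sq_norm in HB'; simpl in HB'.
    assert (Hb1' : 0 < 1 - b1) by (assert (b1 <= 1) by nra; lra).
    assert (Hr : b2 * b2 = (1 - b1) * (1 + b1)) by nra.
    assert (Hv2 : v * v = (1 + b1) / (1 - b1)).
    { unfold v. replace (b2 / (1 - b1) * (b2 / (1 - b1))) with (b2 * b2 / ((1 - b1) * (1 - b1))) by (field; lra).
      rewrite Hr. field. lra. }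
    f_equal; rewrite Hv2.
    - field. lra.
    - unfold v. field. lra. }
  assert (Hcond' : 4 * (1 - dot (rot A C) (rot A A)) * (1 - dot (rot A C) (rot A B)) * (q - p) =
     q * (1 - p) * (1 - sq_norm (rot A C)) * sq_norm (psub (rot A B) (rot A A))).
  { rewrite !rot_dot, rot_sqn, <- rot_psub, rot_sqn by auto. exact Hcond. }
  rewrite rot_self, EB, Ebv in Hcond' by auto.
  assert (HC' : in_D (rot A C)) by (unfold in_D; rewrite rot_sqn; auto).
  destruct (rot A C) as [c1 c2] eqn:EC. rewrite Ebv.
  apply (closure_norm v c1 c2 p q); auto.
Qed.

Lemma cross_mid o v w k b :
  cross o (padd v (pscale k (psub w v))) b = (1 - k) * cross o v b + k * cross o w b.
Proof. unfold cross, padd, pscale, psub; simpl; ring. Qed.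

Lemma cross_00 o a : cross o a a = 0.
Proof. unfold cross; ring. Qed.
Lemma cross_0o o a : cross o a o = 0.
Proof. unfold cross; ring. Qed.

Lemma psi_build P Q C v w X : on_S1 v -> on_S1 w -> w <> v ->
  (X = P \/ X = Q \/ X = C) -> cross v w X = 0 ->
  0 <= cross v w P -> 0 <= cross v w Q -> 0 <= cross v w C ->
  psi_rel (filled_triangle P Q C) v w.
Proof.
  intros Hv Hw Hne HX H0 H1 H2 H3. split; auto. split; auto. split; auto. split.
  - exists X. split; auto. destruct HX as [-> | [-> | ->]]; [apply tri_P|apply tri_Q|apply tri_C].
  - intros u Hu. apply (tri_nonneg P Q C); auto.
Qed.

Lemma F0_at P Q C s t : in_D P -> in_D Q -> in_D C ->
  psi_rel (filled_triangle P Q C) (circ s) (circ t) -> 0 < t - s < 1 -> F0 P Q C s = t.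
Proof.
  intros HP HQ HC Hpsi Hb. pose proof (psi_unique P Q C s (circ t) HP HQ HC Hpsi) as E.
  pose proof (tmin_bounds P Q C s). unfold F0 in *.
  symmetry. apply circ_eq_close; auto. lra.
Qed.

Lemma angle_order a u w : a < u < a + 1 -> a < w < a + 1 ->
  0 < cross (circ a) (circ u) (circ w) -> u < w.
Proof.
  intros Hu Hw Hc. destruct (Rtotal_order u w) as [H|[H|H]]; auto.
  - subst. rewrite cross_00 in Hc. lra.
  - exfalso. assert (0 < cross (circ a) (circ w) (circ u)) by (apply cross_circ_pos; lra).
    rewrite cross_swap in H0. lra.
Qed.

Lemma angle_of a W : on_S1 W -> W <> circ a -> exists w, W = circ w /\ a < w < a + 1.
Proof.
  intros HW Hne. destruct (S1_angle_in W a HW) as [w [Ew Hw]]. exists w. split; auto.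
  split; [lra|]. destruct (Rle_lt_or_eq_dec _ _ (proj2 Hw)); auto. subst. exfalso. apply Hne. apply circ_shift1.
Qed.

Lemma circ_shift2 t : circ (t + 2) = circ t.
Proof. replace (t + 2) with ((t + 1) + 1) by ring. rewrite !circ_shift1. reflexivity. Qed.

Lemma in_D_chord A B s : on_S1 A -> on_S1 B -> A <> B -> 0 < s < 1 -> in_D (padd A (pscale s (psub B A))).
Proof.
  intros HA HB HAB Hs. unfold in_D. rewrite unit_chord_norm by auto.
  pose proof (sq_norm_pos_neq A B HAB). assert (0 < s * (1 - s)) by nra. nra.
Qed.

Lemma orbit A B C p q : on_S1 A -> on_S1 B -> A <> B -> in_D C -> 0 < p -> p < q -> q < 1 ->
  0 < cross A B C ->
  4 * (1 - dot C A) * (1 - dot C B) * (q - p) = q * (1 - p) * (1 - sq_norm C) * sq_norm (psub B A) ->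
  exists x0, Nat.iter 5 (F0 (padd A (pscale p (psub B A))) (padd A (pscale q (psub B A))) C) x0 = x0 + 2.
Proof.
  intros HA HB HAB HC Hp Hpq Hq1 Hor Hcond.
  pose proof (closure A B C p q HA HB HAB HC ltac:(lra) Hcond) as Hclos.
  set (P := padd A (pscale p (psub B A))) in *. set (Q := padd A (pscale q (psub B A))) in *.
  assert (HP : in_D P) by (apply in_D_chord; auto; lra).
  assert (HQ : in_D Q) by (apply in_D_chord; auto; lra).
  set (X0 := sig C A) in *. set (Y := sig C B) in *.
  destruct (sig_props A C HA HC) as [HX0 [HX0A [Hl1 E1]]]. fold X0 in HX0, HX0A, E1.
  destruct (sig_props B C HB HC) as [HY [HYB [Hl2 E2]]]. fold Y in HY, HYB, E2.
  set (l1 := lam C A) in *. set (l2 := lam C B) in *.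
  set (Z := sig P Y).
  destruct (sig_props Y P HY HP) as [HZ [HZY [Hl3 E3]]]. fold Z in HZ, HZY, E3.
  set (l3 := lam P Y) in *.
  assert (HABP : cross A B P = 0) by (unfold P; rewrite cross_comb, cross_0o, cross_00; ring).
  assert (HABQ : cross A B Q = 0) by (unfold Q; rewrite cross_comb, cross_0o, cross_00; ring).
  assert (F1 : 0 < cross A B X0).
  { assert (cross A B C = l1 * cross A B X0) by (rewrite E1 at 1; rewrite cross_comb, cross_0o; ring). nra. }
  assert (F2 : 0 < cross A B Y).
  { assert (cross A B C = l2 * cross A B Y) by (rewrite E2 at 1; rewrite cross_comb, cross_00; ring). nra. }
  assert (F3 : 0 < cross A X0 Y).
  { assert (H0 : cross A X0 C = 0) by (rewrite E1; rewrite cross_comb, cross_0o, cross_00; ring).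
    rewrite E2 in H0. rewrite cross_comb in H0. rewrite (cross_swap A X0 B), <- cross_cyc in H0.
    rewrite (cross_cyc A B X0) in F1.
    assert (0 < (1 - l2) * cross B X0 A) by (apply Rmult_lt_0_compat; lra). 
    rewrite <- (cross_cyc A B X0) in F1. rewrite (cross_cyc B X0 A) in H. nra. }
  assert (F4 : cross A B Z < 0).
  { assert (H0 : cross A B P = (1 - l3) * cross A B Y + l3 * cross A B Z) by (rewrite E3 at 1; apply cross_comb).
    rewrite HABP in H0. nra. }
  destruct (S1_angle A HA) as [a Ea].
  assert (Hne : forall W, on_S1 W -> W <> A -> exists w, W = circ w /\ a < w < a + 1).
  { intros W HW HWA. apply angle_of; auto. rewrite <- Ea. auto. }
  destruct (Hne B HB (fun E => HAB (eq_sym E))) as [b [Eb Hb]].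
  destruct (Hne X0 HX0 HX0A) as [x0 [Ex0 Hx0]].
  destruct (Hne Y HY ltac:(intro E; rewrite E, cross_0o in F2; lra)) as [y [Ey Hy]].
  destruct (Hne Z HZ ltac:(intro E; rewrite E, cross_0o in F4; lra)) as [z [Ez Hz]].
  assert (O1 : b < x0) by (apply (angle_order a); auto; rewrite <- Ea, <- Eb, <- Ex0; auto).
  assert (O2 : x0 < y) by (apply (angle_order a); auto; rewrite <- Ea, <- Ex0, <- Ey; auto).
  assert (O3 : z < b) by (apply (angle_order a); auto; rewrite <- Ea, <- Ez, <- Eb, cross_swap; lra).
  assert (HXZ : X0 <> Z) by (intro E; rewrite Ex0, Ez in E; apply circ_eq_close in E; lra).
  assert (Hcr : cross X0 Z Q = 0).
  { pose proof (sqn_pos_neq Y P HY HP) as HN.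
    assert (EZ : Z = padd Y (pscale (2 * (1 - dot Y P) / sq_norm (psub P Y)) (psub P Y))) by reflexivity.
    rewrite EZ, cross_mid.
    unfold Psi in Hclos. fold P Q X0 Y in Hclos.
    apply (Rmult_eq_reg_r (sq_norm (psub P Y))); [|lra]. rewrite Rmult_0_l.
    rewrite <- Hclos. field. lra. }
  destruct (sig_props X0 Q HX0 HQ) as [_ [_ [Hl4 E4]]].
  assert (EW : sig Q X0 = Z).
  { pose proof (collinear_param X0 Z Q HXZ Hcr) as EQ'.
    apply sig_chord with (l := dot (psub Q X0) (psub Z X0) / sq_norm (psub Z X0)); auto.
    intro El. rewrite El in EQ'. assert (Q = X0) by (rewrite EQ'; destruct X0; unfold padd, pscale; simpl; f_equal; ring).
    unfold in_D, on_S1 in *. rewrite H in HQ. lra. }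
  rewrite EW in E4. set (l4 := lam Q X0) in *.
  set (F := F0 P Q C).
  assert (S1 : F x0 = a + 1).
  { apply F0_at; auto; [|lra]. rewrite circ_shift1, <- Ea, <- Ex0.
    apply psi_build with (X := C).
    - exact HX0.
    - exact HA.
    - intro E; apply HX0A; symmetry; exact E.
    - right; right; reflexivity.
    - rewrite E1. rewrite cross_comb, ?cross_0o, ?cross_00. ring.
    - unfold P. rewrite cross_comb, ?cross_0o, ?cross_00, (cross_cyc X0 A B). nra.
    - unfold Q. rewrite cross_comb, ?cross_0o, ?cross_00, (cross_cyc X0 A B). nra.
    - rewrite E1. rewrite cross_comb, ?cross_0o, ?cross_00. lra. }
  assert (S2 : F (a + 1) = b + 1).
  { apply F0_at; auto; [|lra]. rewrite !circ_shift1, <- Ea, <- Eb.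
    apply psi_build with (X := P).
    - exact HA.
    - exact HB.
    - intro E; apply HAB; symmetry; exact E.
    - left; reflexivity.
    - exact HABP.
    - lra.
    - lra.
    - lra. }
  assert (S3 : F (b + 1) = y + 1).
  { apply F0_at; auto; [|lra]. rewrite !circ_shift1, <- Eb, <- Ey.
    apply psi_build with (X := C).
    - exact HB.
    - exact HY.
    - exact HYB.
    - right; right; reflexivity.
    - rewrite E2. rewrite cross_comb, ?cross_0o, ?cross_00. ring.
    - unfold P. rewrite cross_comb, ?cross_00, ?cross_0o, (cross_cyc B Y A), (cross_cyc Y A B). nra.
    - unfold Q. rewrite cross_comb, ?cross_00, ?cross_0o, (cross_cyc B Y A), (cross_cyc Y A B). nra.
    - rewrite E2. rewrite cross_comb, ?cross_0o, ?cross_00. lra. }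
  assert (S4 : F (y + 1) = z + 2).
  { apply F0_at; auto; [|lra]. rewrite circ_shift1, circ_shift2, <- Ey, <- Ez.
    assert (Hk1 : 0 < cross Y Z X0).
    { rewrite Ey, Ez, Ex0, <- (circ_shift1 z), <- (circ_shift1 x0). apply cross_circ_pos; lra. }
    assert (Hk2 : 0 < cross Y Z B).
    { rewrite Ey, Ez, Eb, <- (circ_shift1 z), <- (circ_shift1 b). apply cross_circ_pos; lra. }
    apply psi_build with (X := P).
    - exact HY.
    - exact HZ.
    - exact HZY.
    - left; reflexivity.
    - rewrite E3. rewrite cross_comb, ?cross_0o, ?cross_00. ring.
    - rewrite E3. rewrite cross_comb, ?cross_0o, ?cross_00. lra.
    - rewrite E4. rewrite cross_comb, ?cross_0o, ?cross_00. nra.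
    - rewrite E2. rewrite cross_comb, ?cross_0o, ?cross_00. nra. }
  assert (S5 : F (z + 2) = x0 + 2).
  { apply F0_at; auto; [|lra]. rewrite !circ_shift2, <- Ez, <- Ex0.
    assert (Hk1 : 0 < cross Z X0 Y).
    { rewrite Ey, Ez, Ex0. apply cross_circ_pos; lra. }
    assert (Hk2 : 0 < cross Z X0 A).
    { rewrite Ea, Ez, Ex0, <- (circ_shift1 a). apply cross_circ_pos; lra. }
    apply psi_build with (X := Q).
    - exact HZ.
    - exact HX0.
    - exact HXZ.
    - right; left; reflexivity.
    - rewrite E4. rewrite cross_comb, ?cross_0o, ?cross_00. ring.
    - rewrite E3. rewrite cross_comb, ?cross_0o, ?cross_00. nra.
    - rewrite E4. rewrite cross_comb, ?cross_0o, ?cross_00. lra.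
    - rewrite E1. rewrite cross_comb, ?cross_0o, ?cross_00. nra. }
  exists x0. simpl. fold F. rewrite S1, S2, S3, S4, S5. reflexivity.
Qed.

Lemma hfun_strict r1 r2 : 1 <= r1 -> r1 < r2 -> hfun r1 < hfun r2.
Proof.
  intros H1 H2. unfold hfun.
  apply Rle_lt_trans with ((r2-1)*(r2-1)/r2 - (r2 - r1) * (1 - /(r1*r2))).
  - right. field. lra.
  - assert (0 < (r2 - r1) * (1 - / (r1 * r2))).
    { apply Rmult_lt_0_compat; [lra|]. assert (1 < r1*r2) by nra.
      assert (/ (r1*r2) < 1). { rewrite <- Rinv_1. apply Rinv_lt_contravar; lra. } lra. }
    lra.
Qed.

Lemma pt_eq_dec (X Y : pt) : {X = Y} + {X <> Y}.
Proof.
  destruct X as [x1 x2], Y as [y1 y2]. destruct (Req_dec_T x1 y1); destruct (Req_dec_T x2 y2);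
  [left; subst; reflexivity| right; intro E; injection E; auto.. ].
Qed.

Lemma dprime_sym X Y : in_D X -> in_D Y -> dprime X Y = dprime Y X.
Proof.
  intros HX HY. destruct (pt_eq_dec X Y) as [E|Hne].
  - subst; reflexivity.
  - assert (Hh : hfun (exp (2 * dprime X Y)) = hfun (exp (2 * dprime Y X))).
    { rewrite !hfun_dprime; auto. unfold Hq. replace (dot Y X) with (dot X Y) by (unfold dot; ring). field.
      unfold in_D in *; split; lra. }
    pose proof (dprime_exp_ge1 X Y HX HY). pose proof (dprime_exp_ge1 Y X HY HX).
    assert (E : exp (2 * dprime X Y) = exp (2 * dprime Y X)).
    { destruct (Rtotal_order (exp (2 * dprime X Y)) (exp (2 * dprime Y X))) as [h|[h|h]]; auto.
      - apply hfun_strict in h; auto. lra.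
      - apply hfun_strict in h; auto. lra. }
    apply (f_equal ln) in E. rewrite !ln_exp in E. lra.
Qed.

Lemma tmin_swap P Q C x : tmin Q P C x = tmin P Q C x.
Proof.
  unfold tmin, Rmin.
  destruct (Rle_dec (theta P x) (theta C x)); destruct (Rle_dec (theta Q x) (theta C x));
  repeat match goal with |- context[Rle_dec ?a ?b] => destruct (Rle_dec a b) end; lra.
Qed.

Lemma F0_swap P Q C x : F0 Q P C x = F0 P Q C x.
Proof. unfold F0. rewrite tmin_swap. reflexivity. Qed.

Lemma iter_ext (f g : R -> R) n x : (forall y, f y = g y) -> Nat.iter n f x = Nat.iter n g x.
Proof. intro H. induction n; simpl; auto. rewrite IHn. apply H. Qed.

Lemma dprime_self X : dprime X X = 0.
Proof. unfold dprime. destruct (Rle_dec _ _) as [_|n]; auto. exfalso. apply n. unfold sq_norm, psub; simpl. lra. Qed.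

Lemma m_pos P Q : in_D P -> in_D Q -> P <> Q -> 0 < / 2 * Deltaprime 1 P Q.
Proof.
  intros HP HQ HPQ.
  destruct (dprime_formula P Q HP HQ HPQ) as [t1 [t2 [Ht1 [Ht2 [_ [_ [Erho _]]]]]]].
  assert (Hr : 1 < (1 - t1) * t2 / (- t1 * (t2 - 1))).
  { apply (Rmult_lt_reg_r (- t1 * (t2 - 1))); [nra|]. field_simplify; nra. }
  set (d := dprime P Q) in *.
  assert (Hd : 0 < d).
  { destruct (Rle_dec d 0); [|lra]. exfalso.
    assert (exp (2*d) <= 1) by (rewrite <- exp_0; apply exp_le; lra). lra. }
  set (e := exp d). assert (He : 1 < e) by (unfold e; rewrite <- exp_0; apply exp_increasing; lra).
  unfold Deltaprime. replace (INR 1) with 1 by reflexivity. rewrite Rmult_1_l. fold d e.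
  assert (1 < (e + 1) / (e - 1)) by (apply (Rmult_lt_reg_r (e - 1)); [lra|]; field_simplify; lra).
  assert (0 < ln ((e + 1) / (e - 1))) by (rewrite <- ln_1; apply ln_increasing; lra).
  lra.
Qed.

Lemma periodic_point P Q C : in_D P -> in_D Q -> in_D C -> P <> Q ->
  delta_is P Q C (/ 2 * Deltaprime 1 P Q) ->
  exists x0, Nat.iter 5 (F0 P Q C) x0 = x0 + 2.
Proof.
  intros HP HQ HC HPQ Hd.
  assert (Hpos : forall P Q, in_D P -> in_D Q -> P <> Q -> 0 < cross P Q C ->
            delta_is P Q C (/ 2 * Deltaprime 1 P Q) -> exists x0, Nat.iter 5 (F0 P Q C) x0 = x0 + 2).
  { clear P Q HP HQ HPQ Hd. intros P Q HP HQ HPQ Hor Hd.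
    destruct (cond_from_delta P Q C HP HQ HC HPQ Hor Hd) as [A [B [p [q [HA [HB [HAB [Hp [Hpq [Hq1 [EP [EQ Hcond]]]]]]]]]]]].
    assert (HorAB : 0 < cross A B C).
    { assert (cross P Q C = (q - p) * cross A B C).
      { rewrite EP, EQ. destruct A, B, C. unfold cross, padd, pscale, psub; simpl. ring. }
      nra. }
    destruct (orbit A B C p q HA HB HAB HC Hp Hpq Hq1 HorAB Hcond) as [x0 Hx0].
    exists x0. rewrite EP, EQ. exact Hx0. }
  destruct (Rtotal_order 0 (cross P Q C)) as [H|[H|H]].
  - apply Hpos; auto.
  - exfalso. destruct Hd as [_ Hmin].
    assert (Hc : on_chord P Q C) by (split; auto).
    pose proof (Hmin C Hc). rewrite dprime_self in H0. pose proof (m_pos P Q HP HQ HPQ). lra.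
  - assert (Hd' : delta_is Q P C (/ 2 * Deltaprime 1 Q P)).
    { unfold Deltaprime. rewrite (dprime_sym Q P) by auto. fold (Deltaprime 1 P Q).
      destruct Hd as [[S0 [[HS0 HS0c] HS0m]] Hmin]. split.
      - exists S0. split; auto. split; auto. rewrite cross_swap. unfold cross in *. lra.
      - intros S [HS HSc]. apply Hmin. split; auto. unfold cross in *. lra. }
    destruct (Hpos Q P HQ HP (fun E => HPQ (eq_sym E))) as [x0 Hx0]; auto.
    { rewrite cross_swap. unfold cross in *. lra. }
    exists x0. rewrite <- Hx0. apply iter_ext. intro y. symmetry. apply F0_swap.
Qed.

Theorem lemma4p3 (P Q C : pt) (HP : in_D P) (HQ : in_D Q) (HC : in_D C)
  (HPQ : P <> Q)
  (Hdelta : delta_is P Q C (/ 2 * Deltaprime 1 P Q)) :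
  (exists F, is_lift_psi (filled_triangle P Q C) F) /\
  (forall F, is_lift_psi (filled_triangle P Q C) F ->
     forall x : R,
       Un_cv (fun n : nat => (Nat.iter n F x - x) / INR n) (2 / 5)).
Proof.
  split.
  - exists (F0 P Q C). apply F0_lift; auto.
  - intros F HF x.
    destruct (periodic_point P Q C HP HQ HC HPQ Hdelta) as [x0 Hx0].
    assert (Hconv := rot_conv (F0 P Q C) (fun a b => F0_mono P Q C a b HP HQ HC) (F0_shift1 P Q C)
                      (fun y => ltac:(unfold F0; pose proof (tmin_bounds P Q C y); lra)) x0 Hx0 x).
    intros eps Heps. destruct (Hconv eps Heps) as [N HN]. exists N. intros n Hn.
    rewrite (iter_ext F (F0 P Q C)) by (apply lift_eq_F0; auto). apply HN; auto.
Qed.
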